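(* Let $d\sigma^2$ be a smooth positive semi-definite metric on a $2$-manifold $M^2$, let $p$ be a singular point of $d\sigma^2$ at which the null space $\mathcal{N}_p$ is one-dimensional, and let $(u,v)$ be a local coordinate system centered at $p$, with $d\sigma^2=E\,du^2+2F\,du\,dv+G\,dv^2$. If $p$ is admissible and $(u,v)$ is adjusted at $p$, then $F=G=0$, $E_v=2F_u$, $G_u=G_v=0$ hold at $p=(0,0)$. Conversely, if there exists a local coordinate system $(u,v)$ centered at $p$ satisfying these identities at $(0,0)$, then $p$ is an admissible singular point and $(u,v)$ is adjusted at $p$.
   Context: Write $\langle X,Y\rangle=d\sigma^2(X,Y)$. A point is singular if $d\sigma^2$ is not positive definite there. The null space at $p$ is $\mathcal{N}_p=\{v\in T_pM^2: d\sigma^2(v,w)=0\ \forall w\in T_pM^2\}$. The Kossowski pseudo-connection is $\Gamma(X,Y,Z)=\tfrac12\bigl(X\langle Y,Z\rangle+Y\langle X,Z\rangle-Z\langle X,Y\rangle+\langle[X,Y],Z\rangle-\langle[X,Z],Y\rangle-\langle[Y,Z],X\rangle\bigr)$. A singular point $p$ is admissible if $\Gamma(V_1,V_2,V_3)(p)=0$ for all smooth vector fields $V_1,V_2,V_3$ with $V_3(p)\in\mathcal{N}_p$. A local coordinate system $(u,v)$ is adjusted at a singular point $p$ if $\partial/\partial v\in\mathcal{N}_p$. *)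

(* Defs.v *)
(* Everything is expressed in a local chart (u,v)
   centered at p, i.e. p = (0,0). *)
From Stdlib Require Import Reals.
From Coquelicot Require Import Coquelicot.
Open Scope R_scope.

Definition fn := R -> R -> R.

Definition pu (f : fn) : fn := fun u v => Derive (fun t => f t v) u.
Definition pv (f : fn) : fn := fun u v => Derive (fun t => f u t) v.

Fixpoint Ck (k : nat) (U : R * R -> Prop) (f : fn) : Prop :=
  match k with
  | O => forall z, U z -> continuous (fun w : R * R => f (fst w) (snd w)) z
  | S k' =>
      (forall z, U z -> ex_derive (fun t => f t (snd z)) (fst z)
                      /\ ex_derive (fun t => f (fst z) t) (snd z))
      /\ Ck k' U f /\ Ck k' U (pu f) /\ Ck k' U (pv f)
  end.

Definition smooth_on (U : R * R -> Prop) (f : fn) : Prop := forall k, Ck k U f.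

(* A vector field a d/du + b d/dv, given by its component functions. *)
Definition vfield := (fn * fn)%type.

Definition smooth_vf (U : R * R -> Prop) (X : vfield) : Prop :=
  smooth_on U (fst X) /\ smooth_on U (snd X).

Definition ds2 (E F G : fn) (u v a1 b1 a2 b2 : R) : R :=
  E u v * a1 * a2 + F u v * (a1 * b2 + b1 * a2) + G u v * b1 * b2.

Definition inner (E F G : fn) (X Y : vfield) : fn :=
  fun u v => ds2 E F G u v (fst X u v) (snd X u v) (fst Y u v) (snd Y u v).

Definition der (X : vfield) (f : fn) : fn :=
  fun u v => fst X u v * pu f u v + snd X u v * pv f u v.

Definition bracket (X Y : vfield) : vfield :=
  (fun u v => der X (fst Y) u v - der Y (fst X) u v,
   fun u v => der X (snd Y) u v - der Y (snd X) u v).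

Definition Gamma (E F G : fn) (X Y Z : vfield) : fn :=
  fun u v => / 2 * ( der X (inner E F G Y Z) u v + der Y (inner E F G X Z) u v
                     - der Z (inner E F G X Y) u v
                     + inner E F G (bracket X Y) Z u v
                     - inner E F G (bracket X Z) Y u v
                     - inner E F G (bracket Y Z) X u v).

Definition psd_on (U : R * R -> Prop) (E F G : fn) : Prop :=
  forall z, U z -> forall a b, 0 <= ds2 E F G (fst z) (snd z) a b a b.

Definition singular_at (E F G : fn) (u v : R) : Prop :=
  ~ (forall a b, (a, b) <> (0, 0) -> 0 < ds2 E F G u v a b a b).

Definition in_null (E F G : fn) (u v a b : R) : Prop :=
  forall c d, ds2 E F G u v a b c d = 0.

Definition null_one_dim (E F G : fn) (u v : R) : Prop :=
  exists a b, (a, b) <> (0, 0) /\ in_null E F G u v a b /\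
    (forall c d, in_null E F G u v c d -> exists t, c = t * a /\ d = t * b).

Definition admissible_at0 (U : R * R -> Prop) (E F G : fn) : Prop :=
  forall X Y Z : vfield, smooth_vf U X -> smooth_vf U Y -> smooth_vf U Z ->
    in_null E F G 0 0 (fst Z 0 0) (snd Z 0 0) ->
    Gamma E F G X Y Z 0 0 = 0.

(* the chart is adjusted at (0,0): d/dv = (0,1) lies in the null space *)
Definition adjusted_at0 (E F G : fn) : Prop := in_null E F G 0 0 0 1.

(* Main.v *)
Require Import Defs.
From Stdlib Require Import Reals Lra FunctionalExtensionality.
From Coquelicot Require Import Coquelicot.
Open Scope R_scope.

Definition D0 (f : fn) := ex_derive (fun t => f t 0) 0 /\ ex_derive (fun t => f 0 t) 0.

Lemma smooth_D0 U f : U (0,0) -> smooth_on U f -> D0 f.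
Proof. intros H0 Hs. destruct (Hs 1%nat) as [H _]. exact (H (0,0) H0). Qed.

Lemma pu_inner E F G (Y Z : vfield) :
  D0 E -> D0 F -> D0 G -> D0 (fst Y) -> D0 (snd Y) -> D0 (fst Z) -> D0 (snd Z) ->
  pu (inner E F G Y Z) 0 0 =
   pu E 0 0 * fst Y 0 0 * fst Z 0 0 + E 0 0 * pu (fst Y) 0 0 * fst Z 0 0 + E 0 0 * fst Y 0 0 * pu (fst Z) 0 0
 + pu F 0 0 * (fst Y 0 0 * snd Z 0 0 + snd Y 0 0 * fst Z 0 0)
 + F 0 0 * (pu (fst Y) 0 0 * snd Z 0 0 + fst Y 0 0 * pu (snd Z) 0 0 + pu (snd Y) 0 0 * fst Z 0 0 + snd Y 0 0 * pu (fst Z) 0 0)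
 + pu G 0 0 * snd Y 0 0 * snd Z 0 0 + G 0 0 * pu (snd Y) 0 0 * snd Z 0 0 + G 0 0 * snd Y 0 0 * pu (snd Z) 0 0.
Proof.
  intros [e1 e2] [f1 f2] [g1 g2] [a1 a2] [b1 b2] [c1 c2] [d1 d2].
  unfold pu, inner, ds2. apply is_derive_unique.
  auto_derive. repeat split; auto. unfold pu. ring.
Qed.

Lemma pv_inner E F G (Y Z : vfield) :
  D0 E -> D0 F -> D0 G -> D0 (fst Y) -> D0 (snd Y) -> D0 (fst Z) -> D0 (snd Z) ->
  pv (inner E F G Y Z) 0 0 =
   pv E 0 0 * fst Y 0 0 * fst Z 0 0 + E 0 0 * pv (fst Y) 0 0 * fst Z 0 0 + E 0 0 * fst Y 0 0 * pv (fst Z) 0 0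
 + pv F 0 0 * (fst Y 0 0 * snd Z 0 0 + snd Y 0 0 * fst Z 0 0)
 + F 0 0 * (pv (fst Y) 0 0 * snd Z 0 0 + fst Y 0 0 * pv (snd Z) 0 0 + pv (snd Y) 0 0 * fst Z 0 0 + snd Y 0 0 * pv (fst Z) 0 0)
 + pv G 0 0 * snd Y 0 0 * snd Z 0 0 + G 0 0 * pv (snd Y) 0 0 * snd Z 0 0 + G 0 0 * snd Y 0 0 * pv (snd Z) 0 0.
Proof.
  intros [e1 e2] [f1 f2] [g1 g2] [a1 a2] [b1 b2] [c1 c2] [d1 d2].
  unfold pv, inner, ds2. apply is_derive_unique.
  auto_derive. repeat split; auto. unfold pv. ring.
Qed.

Lemma Derive_c (c x : R) : Derive (fun _ => c) x = 0.
Proof. apply Derive_const. Qed.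

Lemma pu_const c : pu (fun _ _ => c) = fun _ _ => 0.
Proof. unfold pu. do 2 (apply functional_extensionality; intro). apply Derive_const. Qed.
Lemma pv_const c : pv (fun _ _ => c) = fun _ _ => 0.
Proof. unfold pv. do 2 (apply functional_extensionality; intro). apply Derive_const. Qed.

Lemma Ck_const U k : forall c, Ck k U (fun _ _ => c).
Proof.
  induction k; intros c; simpl.
  - intros z _. apply continuous_const.
  - rewrite pu_const, pv_const. repeat split; auto; apply ex_derive_const.
Qed.

Lemma D0_const c : D0 (fun _ _ => c).
Proof. split; apply ex_derive_const. Qed.

Definition cvf (a b : R) : vfield := (fun _ _ => a, fun _ _ => b).
Lemma cvf_smooth U a b : smooth_vf U (cvf a b).
Proof. split; intro k; exact (Ck_const U k _). Qed.

Theorem proposition2p7 (U : R * R -> Prop) (E F G : R -> R -> R) :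
  open U -> U (0, 0) ->
  smooth_on U E -> smooth_on U F -> smooth_on U G ->
  psd_on U E F G ->
  singular_at E F G 0 0 ->
  null_one_dim E F G 0 0 ->
  (admissible_at0 U E F G /\ adjusted_at0 E F G) <->
  (F 0 0 = 0 /\ G 0 0 = 0 /\ pv E 0 0 = 2 * pu F 0 0 /\
   pu G 0 0 = 0 /\ pv G 0 0 = 0).
Proof.
  intros _ H0 HE HF HG _ _ Hn.
  pose proof (smooth_D0 _ _ H0 HE) as dE.
  pose proof (smooth_D0 _ _ H0 HF) as dF.
  pose proof (smooth_D0 _ _ H0 HG) as dG.
  assert (Gf : forall X Y Z : vfield, D0 (fst X) -> D0 (snd X) -> D0 (fst Y) -> D0 (snd Y) ->
     D0 (fst Z) -> D0 (snd Z) ->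
     Gamma E F G X Y Z 0 0 = / 2 * (
       fst X 0 0 * pu (inner E F G Y Z) 0 0 + snd X 0 0 * pv (inner E F G Y Z) 0 0
     + (fst Y 0 0 * pu (inner E F G X Z) 0 0 + snd Y 0 0 * pv (inner E F G X Z) 0 0)
     - (fst Z 0 0 * pu (inner E F G X Y) 0 0 + snd Z 0 0 * pv (inner E F G X Y) 0 0)
     + inner E F G (bracket X Y) Z 0 0 - inner E F G (bracket X Z) Y 0 0
     - inner E F G (bracket Y Z) X 0 0)).
  { intros. reflexivity. }
  split.
  - intros [Had Hadj].
    assert (HF0 : F 0 0 = 0).
    { specialize (Hadj 1 0). unfold ds2 in Hadj. lra. }
    assert (HG0 : G 0 0 = 0).
    { specialize (Hadj 0 1). unfold ds2 in Hadj. lra. }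
    assert (Hz : in_null E F G 0 0 (fst (cvf 0 1) 0 0) (snd (cvf 0 1) 0 0)).
    { exact Hadj. }
    assert (K : forall a b c d, Gamma E F G (cvf a b) (cvf c d) (cvf 0 1) 0 0 = 0).
    { intros. apply Had; auto using cvf_smooth. }
    assert (K' : forall a b c d, Gamma E F G (cvf a b) (cvf c d) (cvf 0 1) 0 0 =
       / 2 * (a * c * (2 * pu F 0 0 - pv E 0 0) + (a * d + b * c) * pu G 0 0 + b * d * pv G 0 0)).
    { intros. rewrite Gf by exact (D0_const _).
      rewrite !pu_inner, !pv_inner by (first [exact (D0_const _) | assumption]).
      unfold inner, bracket, ds2, der, cvf; simpl. unfold pu, pv. rewrite !Derive_c.
      rewrite HF0, HG0. ring. }
    pose proof (K 1 0 1 0) as k1. pose proof (K 1 0 0 1) as k2. pose proof (K 0 1 0 1) as k3.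
    rewrite K' in k1, k2, k3.
    repeat split; auto; lra.
  - intros (HF0 & HG0 & HEv & HGu & HGv).
    assert (HE0 : E 0 0 <> 0).
    { intro HE0. destruct Hn as (a & b & Hab & _ & Hall).
      assert (Hn0 : forall c d, in_null E F G 0 0 c d).
      { intros c d x y. unfold ds2. rewrite HE0, HF0, HG0. ring. }
      destruct (Hall 1 0 (Hn0 1 0)) as (t & h1 & h2).
      destruct (Hall 0 1 (Hn0 0 1)) as (s & h3 & h4).
      assert (t <> 0) by (intro; subst; lra).
      assert (b = 0) by (symmetry in h2; apply Rmult_integral in h2; tauto).
      subst b. lra. }
    split.
    + intros X Y Z [X1 X2] [Y1 Y2] [Z1 Z2] Hz.
      assert (Hz1 : fst Z 0 0 = 0).
      { specialize (Hz 1 0). unfold ds2 in Hz. rewrite HF0, HG0 in Hz.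
        assert (E 0 0 * fst Z 0 0 = 0) as Hz' by lra.
        apply Rmult_integral in Hz' as [Hz'|Hz']; [lra|auto]. }
      pose proof (smooth_D0 _ _ H0 X1). pose proof (smooth_D0 _ _ H0 X2).
      pose proof (smooth_D0 _ _ H0 Y1). pose proof (smooth_D0 _ _ H0 Y2).
      pose proof (smooth_D0 _ _ H0 Z1). pose proof (smooth_D0 _ _ H0 Z2).
      rewrite Gf by auto.
      rewrite !pu_inner, !pv_inner by auto.
      unfold inner, bracket, ds2, der; simpl.
      rewrite HEv, HGu, HGv, HF0, HG0, Hz1. ring.
    + intros c d. unfold ds2. rewrite HF0, HG0. ring.
Qed.
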